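(* For all integers $L\ge1$ and $M\ge L+1$, $$\sigma_{\min}\Big(\frac{\bar B}{\sqrt M}\Big)\ge\frac{1}{L^2\,2^{7L}(2L+1)}\left(\frac{M+L}{eM}\right)^{L+0.5}.$$
   Context: $\bar B$ is the $M\times(L+1)$ real Vandermonde matrix with entries $\bar B_{i,j}=(i/M)^{j}$ for $1\le i\le M$, $0\le j\le L$ (so its first column is all ones). $\sigma_{\min}$ denotes the smallest singular value. *)

(* Defs.v *)
From HB Require Import structures.
From mathcomp Require Import all_boot all_order all_algebra.
From mathcomp Require Import all_classical all_reals all_analysis.
Set Implicit Arguments. Unset Strict Implicit. Unset Printing Implicit Defensive.
Import Order.TTheory GRing.Theory Num.Theory.
Local Open Scope ring_scope.
Local Open Scope classical_set_scope.

Definition sigma_min (R : realType) (m n : nat) (A : 'M[R]_(m, n)) : R :=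
  Num.sqrt (inf [set a : R | eigenvalue (A^T *m A) a]).

(* The M x (L+1) Vandermonde matrix Bbar_{i,j} = (i/M)^j, 1 <= i <= M, 0 <= j <= L
   (row index i0 : 'I_M stands for i = i0+1). *)
Definition Bbar (R : realType) (M L : nat) : 'M[R]_(M, L.+1) :=
  \matrix_(i < M, j < L.+1) (((i : nat).+1)%:R / M%:R) ^+ (j : nat).

(* Main.v *)
Require Import Defs.
From HB Require Import structures.
From mathcomp Require Import all_boot all_order all_algebra.
From mathcomp Require Import all_classical all_reals all_analysis.
From mathcomp Require Import complex.
From mathcomp Require Import ring lra zify.
Import Order.TTheory GRing.Theory Num.Theory.
Local Open Scope ring_scope.

Section Eig.
Variable R : realType.

Lemma Re_sum (I : Type) (r : seq I) (F : I -> R[i]) :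
  complex.Re (\sum_(i <- r) F i) = \sum_(i <- r) complex.Re (F i).
Proof.
elim: r => [|a r IH]; first by rewrite !big_nil.
by rewrite !big_cons -IH; case: (F a) => ? ?; case: (\sum_(i <- r) F i).
Qed.

Lemma Im_sum (I : Type) (r : seq I) (F : I -> R[i]) :
  complex.Im (\sum_(i <- r) F i) = \sum_(i <- r) complex.Im (F i).
Proof.
elim: r => [|a r IH]; first by rewrite !big_nil.
by rewrite !big_cons -IH; case: (F a) => ? ?; case: (\sum_(i <- r) F i).
Qed.

Lemma Re_mulC (z : R[i]) (c : R) : complex.Re (z * c%:C%C) = complex.Re z * c.
Proof. by case: z => a b /=; rewrite mulr0 subr0. Qed.
Lemma Im_mulC (z : R[i]) (c : R) : complex.Im (z * c%:C%C) = complex.Im z * c.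
Proof. by case: z => a b /=; rewrite mulr0 add0r. Qed.
Lemma Re_mul (z w : R[i]) : complex.Re (z * w) = complex.Re z * complex.Re w - complex.Im z * complex.Im w.
Proof. by case: z => a b; case: w => c d. Qed.
Lemma Im_mul (z w : R[i]) : complex.Im (z * w) = complex.Re z * complex.Im w + complex.Im z * complex.Re w.
Proof. by case: z => a b; case: w => c d. Qed.


Lemma sym_eig n (G : 'M[R]_n.+1) : G^T = G -> exists a, eigenvalue G a.
Proof.
move=> Gs.
have [l /eigenvalueP [v hv vnz]] :=
  eigenvalue_closed (map_mx (real_complex R) G) (ltn0Sn n).
set x := map_mx (@complex.Re R) v; set y := map_mx (@complex.Im R) v.
set al := complex.Re l; set be := complex.Im l.
have E j : \sum_i v 0 i * (G i j)%:C%C = l * v 0 j.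
  by have := congr1 (fun M : 'M[R[i]]_(1, n.+1) => M 0 j) hv; rewrite !mxE => <-; apply: eq_bigr => i _; rewrite mxE.
have Ex j : \sum_i x 0 i * G i j = al * x 0 j - be * y 0 j.
  have := congr1 (@complex.Re R) (E j); rewrite Re_sum Re_mul !mxE => <-.
  by apply: eq_bigr => i _; rewrite Re_mulC !mxE.
have Ey j : \sum_i y 0 i * G i j = be * x 0 j + al * y 0 j.
  have := congr1 (@complex.Im R) (E j); rewrite Im_sum Im_mul !mxE [be * _ + _]addrC => <-.
  by apply: eq_bigr => i _; rewrite Im_mulC !mxE.
have S12 : \sum_j (\sum_i x 0 i * G i j) * y 0 j = \sum_j (\sum_i y 0 i * G i j) * x 0 j.
  under eq_bigr do rewrite mulr_suml.
  under [RHS]eq_bigr do rewrite mulr_suml.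
  rewrite exchange_big /=; apply: eq_bigr => i _; apply: eq_bigr => j _.
  have -> : G j i = G i j by rewrite -{1}Gs mxE.
  ring.
have hb : be * \sum_j (x 0 j ^+ 2 + y 0 j ^+ 2) = 0.
  have S12' : \sum_j (al * x 0 j - be * y 0 j) * y 0 j = \sum_j (be * x 0 j + al * y 0 j) * x 0 j.
    transitivity (\sum_j (\sum_i x 0 i * G i j) * y 0 j).
      by apply: eq_bigr => j _; rewrite Ex.
    by rewrite S12; apply: eq_bigr => j _; rewrite Ey.
  rewrite mulr_sumr.
  transitivity (\sum_j (be * x 0 j + al * y 0 j) * x 0 j - \sum_j (al * x 0 j - be * y 0 j) * y 0 j).
    by rewrite -sumrB; apply: eq_bigr => j _; ring.
  by rewrite S12' subrr.
have [j vj] : exists j, v 0 j != 0.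
  apply/existsP; move: vnz; apply: contraR; rewrite negb_exists => /forallP h.
  by apply/eqP/rowP => j; rewrite mxE; move: (h j); rewrite negbK => /eqP ->.
have pos : 0 < \sum_j (x 0 j ^+ 2 + y 0 j ^+ 2).
  rewrite (bigD1 j) //=; apply: ltr_pwDl; last by apply: sumr_ge0 => k _; rewrite addr_ge0 ?sqr_ge0.
  move: vj; rewrite !mxE; case: (v 0 j) => a b /=; apply: contraNT; rewrite -leNgt.
  move=> h; have : a ^+ 2 + b ^+ 2 == 0 by rewrite eq_le h addr_ge0 ?sqr_ge0.
  by rewrite paddr_eq0 ?sqr_ge0 // !sqrf_eq0 => /andP [/eqP -> /eqP ->].
have be0 : be = 0.
  by move: hb => /eqP; rewrite mulf_eq0 (gt_eqF pos) orbF => /eqP.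
have [x0|xnz] := eqVneq x 0.
  exists al; apply/eigenvalueP; exists y.
    by apply/rowP => k; rewrite [LHS]mxE Ey [RHS]mxE be0 mul0r add0r.
  move: vj; apply: contraNneq => y0.
  have := congr1 (fun M : 'M[R]_(1, n.+1) => M 0 j) x0; have := congr1 (fun M : 'M[R]_(1, n.+1) => M 0 j) y0.
  rewrite !mxE; case: (v 0 j) => a b /= -> ->; by [].
exists al; apply/eigenvalueP; exists x => //.
by apply/rowP => k; rewrite [LHS]mxE Ex [RHS]mxE be0 mul0r subr0.
Qed.
End Eig.

Lemma prod_dist_gen (n k : nat) :
  ((\prod_(m < n) (if (m : nat) != k then ((k - m) + (m - k))%N else 1%N)) *
   (if (k < n)%N then 1 else (k - n)`!) = k`! * (if (k < n)%N then (n.-1 - k)`! else 1))%N.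
Proof.
elim: n => [|n IH]; first by rewrite big_ord0 mul1n muln1 subn0.
rewrite big_ord_recr /=.
have [kn|kn] := ltnP k n.
  rewrite kn in IH; rewrite muln1 in IH.
  have -> : (k < n.+1)%N by lia.
  have -> : (n != k) by lia.
  have -> : ((k - n) + (n - k) = n - k)%N by lia.
  have -> : (n.+1.-1 - k = (n.-1 - k).+1)%N by lia.
  rewrite muln1 IH factS -mulnA; congr (_ * _)%N.
  have -> : (n.-1 - k).+1 = (n - k)%N by lia.
  by rewrite mulnC.
rewrite ltnNge kn /= in IH.
have [ek|nk] := eqVneq n k.
  subst k; rewrite ltnSn /= !muln1 subnn fact0 muln1.
  by move: IH; rewrite subnn fact0 !muln1.
have kn1 : (k < n.+1)%N = false by lia.
rewrite kn1 /= muln1.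
have -> : ((k - n) + (n - k) = k - n)%N by lia.
have e : (k - n = (k - n.+1).+1)%N by lia.
rewrite e; rewrite e factS muln1 in IH.
by rewrite -IH mulnA.
Qed.

Lemma prod_dist (n k : nat) : (k < n)%N ->
  (\prod_(m < n | (m : nat) != k) ((k - m) + (m - k)))%N = (k`! * (n.-1 - k)`!)%N.
Proof.
move=> kn; have := prod_dist_gen n k; rewrite kn muln1 => <-.
by rewrite big_mkcond.
Qed.

Section Interp.
Variable R : realType.

Lemma prodX_coef (I : Type) (r : seq I) (P : pred I) (c : I -> R) :
  (forall i, 0 <= c i <= 1) ->
  forall j, `|(\prod_(i <- r | P i) ('X - (c i)%:P))`_j| <= 2 ^+ size r.
Proof.
move=> hc; elim: r => [|a r IH] j.
  by rewrite big_nil coef1 /= expr0; case: (j == 0)%N; rewrite ?normr1 ?normr0.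
rewrite big_cons /= exprS.
case: (P a); last by apply: (le_trans (IH j)); rewrite ler_peMl ?exprn_ge0 ?ler1n.
rewrite mulrBl coefB coefXM coefCM.
have /andP [c0 c1] := hc a.
apply: (le_trans (ler_normB _ _)); rewrite mulr_natl mulr2n lerD //.
  by case: (j == 0)%N; rewrite ?normr0 ?exprn_ge0 ?IH.
rewrite normrM (ger0_norm c0); apply: (le_trans (ler_wpM2r (normr_ge0 _) c1)).
by rewrite mul1r IH.
Qed.

Lemma size_index_enum_ord n : size (index_enum 'I_n) = n.
Proof.
by rewrite -(filter_predT (index_enum _)) deprecated_filter_index_enum -cardE card_ord.
Qed.


Lemma bin_le_exp2 n k : ('C(n, k) <= 2 ^ n)%N.
Proof.
elim: n k => [|n IH] [|k] //; first by rewrite bin0 expn_gt0.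
by rewrite binS expnS; have := IH k; have := IH k.+1; lia.
Qed.

Lemma coef_bound (L : nat) (a h : R) (p : {poly R}) :
  0 < h -> 0 <= a -> a + L%:R * h <= 1 -> (size p <= L.+1)%N ->
  forall j, `|p`_j| <= 2 ^+ (2 * L + 1) / (h ^+ L * L`!%:R) *
     \sum_(k < L.+1) `|p.[a + k%:R * h]|.
Proof.
move=> h0 a0 aLh sp j.
pose x := fun m : nat => a + m%:R * h.
have xinj : injective x.
  move=> m m' /addrI /(mulIf (lt0r_neq0 h0)) /eqP; rewrite eqr_nat => /eqP //.
have xb (i : 'I_L.+1) : 0 <= x i <= 1.
  apply/andP; split; first by rewrite addr_ge0 // mulr_ge0 // ltW.
  apply: le_trans aLh; apply: lerD => //; apply: ler_wpM2r; first exact: ltW.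
  by rewrite ler_nat -ltnS.
rewrite {1}(lagrange_gen (ltn0Sn L) xinj sp) coef_sum mulr_sumr.
apply: (le_trans (ler_norm_sum _ _ _)); apply: ler_sum => k _.
rewrite (lagrangeE (ltn0Sn L) xinj) /= coefCM coefCM.
set P := \prod_(_ < _ | _) _.
rewrite [X in _ <= X]mulrC normrM ler_wpM2l //.
have PB : `|P`_j| <= 2 ^+ L.+1.
  rewrite -[in X in _ <= X](size_index_enum_ord L.+1).
  by apply: prodX_coef => i; exact: xb i.
have DB : h ^+ L * L`!%:R <= 2 ^+ L * `|P.[x k]|.
  rewrite horner_prod normr_prod.
  have -> : \prod_(m < L.+1 | m != k) `|('X - (x m)%:P).[x k]| =
      \prod_(m < L.+1 | m != k) (((k - m) + (m - k))%N%:R * h).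
    apply: eq_bigr => m _; rewrite hornerXsubC /x.
    have -> : a + k%:R * h - (a + m%:R * h) = (k%:R - m%:R) * h by ring.
    rewrite normrM (gtr0_norm h0); congr (_ * _).
    case: (leqP m k) => mk.
      have -> : (m - k = 0)%N by lia.
      by rewrite addn0 natrB // ger0_norm // subr_ge0 ler_nat.
    have -> : (k - m = 0)%N by lia.
    by rewrite add0n natrB ?(ltnW mk) // distrC ger0_norm // subr_ge0 ler_nat ltnW.
  rewrite big_split /= -natr_prod (@prod_dist L.+1 k (ltn_ord k)) /= prodr_const cardC1 card_ord /=.
  have kL : (k <= L)%N by rewrite -ltnS.
  rewrite -{1}(bin_fact kL) natrM.
  set F := (_ * _)%:R; have -> : h ^+ L * ('C(L, k)%:R * F) = 'C(L, k)%:R * (F * h ^+ L) by ring.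
  apply: ler_wpM2r; first by rewrite mulr_ge0 ?ler0n ?exprn_ge0 ?ltW.
  by rewrite -natrX ler_nat; exact: bin_le_exp2.
have w0 : 0 < h ^+ L * L`!%:R by rewrite mulr_gt0 ?exprn_gt0 ?ltr0n ?fact_gt0.
have u0 : 0 < `|P.[x k]|.
  by rewrite -(pmulr_rgt0 _ (exprn_gt0 L (ltr0n R 2))); apply: lt_le_trans DB.
have D0 : P.[x k] != 0 by rewrite -normr_gt0.
rewrite normrM normrV ?unitfE //.
have uB : `|P.[x k]|^-1 <= 2 ^+ L / (h ^+ L * L`!%:R).
  rewrite ler_pdivlMr // mulrC ler_pdivrMr //.
have -> : 2 ^+ (2 * L + 1) / (h ^+ L * L`!%:R) = 2 ^+ L / (h ^+ L * L`!%:R) * 2 ^+ L.+1.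
  have -> : (2 * L + 1 = L + L.+1)%N by lia.
  by rewrite exprD mulrAC.
by apply: ler_pM => //; rewrite invr_ge0 ltW.
Qed.


Definition Pv {L} (v : 'rV[R]_L.+1) (t : R) := \sum_(j < L.+1) v 0 j * t ^+ j.

Lemma eqle (x y : R) : x = y -> x <= y.
Proof. by move=> ->. Qed.

Lemma sq_le (x c : R) : `|x| <= c -> x ^+ 2 <= c ^+ 2.
Proof.
move=> h; rewrite -real_normK ?num_real // !expr2.
by apply: ler_pM => //; apply: normr_ge0.
Qed.

Lemma interp_sq (L : nat) (a h : R) (v : 'rV[R]_L.+1) :
  0 < h -> 0 <= a -> a + L%:R * h <= 1 ->
  \sum_(j < L.+1) v 0 j ^+ 2 <=
  L.+1%:R ^+ 3 * (2 ^+ (2 * L + 1) / (h ^+ L * L`!%:R)) ^+ 2 *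
    \sum_(k < L.+1) (Pv v (a + k%:R * h)) ^+ 2.
Proof.
move=> h0 a0 aLh.
pose p := \poly_(j < L.+1) v 0 (inord j).
have sp : (size p <= L.+1)%N by apply: size_poly.
have pe t : p.[t] = Pv v t.
  by rewrite horner_poly; apply: eq_bigr => j _; rewrite inord_val.
have pc (j : 'I_L.+1) : p`_j = v 0 j by rewrite coef_poly ltn_ord inord_val.
set Cm := 2 ^+ (2 * L + 1) / (h ^+ L * L`!%:R).
have Cm0 : 0 <= Cm by rewrite divr_ge0 ?exprn_ge0 // mulr_ge0 ?exprn_ge0 ?ler0n ?ltW.
set Y := \sum_(k < L.+1) (Pv v (a + k%:R * h)) ^+ 2.
have Y0 : 0 <= Y by apply: sumr_ge0 => k _; apply: sqr_ge0.
have yk (k : 'I_L.+1) : `|Pv v (a + k%:R * h)| <= Num.sqrt Y.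
  rewrite -sqrtr_sqr; apply: ler_wsqrtr.
  by rewrite /Y (bigD1 k) //= lerDl sumr_ge0 // => i _; apply: sqr_ge0.
have vj (j : 'I_L.+1) : `|v 0 j| <= Cm * (L.+1%:R * Num.sqrt Y).
  have := coef_bound L a h p h0 a0 aLh sp j; rewrite pc => /le_trans; apply.
  apply: ler_wpM2l => //.
  have -> : L.+1%:R * Num.sqrt Y = \sum_(i < L.+1) Num.sqrt Y.
    by rewrite sumr_const card_ord mulr_natl.
  by apply: ler_sum => k _; rewrite pe; apply: yk.
apply: (le_trans (ler_sum _ (fun j _ => sq_le _ _ (vj j)))).
rewrite sumr_const card_ord -mulr_natl !exprMn sqr_sqrtr //.
rewrite -mulr_natl le_eqVlt; apply/orP; left; apply/eqP; ring.
Qed.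


Lemma fact_exp (n : nat) : n.+1%:R ^+ n <= expR (1 : R) ^+ n * n`!%:R.
Proof.
elim: n => [|n IH]; first by rewrite !expr0 fact0 mul1r.
have key : n.+2%:R ^+ n.+1 <= expR (1 : R) * n.+1%:R ^+ n.+1.
  have n0 : (0 : R) < n.+1%:R by rewrite ltr0n.
  have -> : n.+2%:R = n.+1%:R * (1 + n.+1%:R^-1) :> R.
    by rewrite mulrDr mulr1 mulfV ?lt0r_neq0 // -natr1.
  rewrite exprMn [X in _ <= X]mulrC ler_pM2l ?exprn_gt0 //.
  have -> : expR (1 : R) = expR (n.+1%:R^-1) ^+ n.+1.
    by rewrite -expRM_natr mulVf ?lt0r_neq0.
  apply: (@lerXn2r R n.+1 (1 + n.+1%:R^-1) (expR n.+1%:R^-1)).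
  - by rewrite nnegrE addr_ge0 ?invr_ge0 ?ltW.
  - by rewrite nnegrE expR_ge0.
  - exact: expR_ge1Dx.
apply: (le_trans key); rewrite factS natrM exprS.
have -> : expR (1:R) ^+ n.+1 * (n.+1%:R * n`!%:R) = expR 1 * (n.+1%:R * (expR 1 ^+ n * n`!%:R)) by rewrite exprS; ring.
by rewrite ler_pM2l ?expR_gt0 // ler_pM2l ?ltr0n.
Qed.

Lemma sum_split (f : nat -> R) (n q M : nat) : (forall i, 0 <= f i) -> (n * q <= M)%N ->
  \sum_(r < q) \sum_(k < n) f (k * q + r)%N <= \sum_(i < M) f i.
Proof.
move=> f0 nqM.
have E : forall m, \sum_(0 <= i < m * q) f i = \sum_(k < m) \sum_(r < q) f (k * q + r)%N.
  elim=> [|m IH]; first by rewrite mul0n big_geq // big_ord0.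
  rewrite big_ord_recr /= -IH mulSn addnC (big_cat_nat _ (leq_addr _ _)) //=.
  congr (_ + _); rewrite -{1}[(m * q)%N]add0n big_addn.
  have -> : (m * q + q - m * q = q)%N by lia.
  by rewrite big_mkord; apply: eq_bigr => i _; rewrite addnC.
rewrite exchange_big /= -E.
rewrite -(big_mkord xpredT) (@big_cat_nat _ _ _ (n * q) 0 M _ _ (leq0n _) nqM) //= lerDl.
by apply: sumr_ge0 => i _.
Qed.


Lemma key (L M : nat) (v : 'rV[R]_L.+1) : (L.+1 <= M)%N ->
  M%:R * (\sum_(j < L.+1) v 0 j ^+ 2) <=
  (8 * L.+1%:R ^+ 4 * 64 ^+ L * expR 1 ^+ (2 * L)) *
    \sum_(i < M) (Pv v (i.+1%:R / M%:R)) ^+ 2.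
Proof.
move=> LM.
set n := L.+1.
set q := (M %/ n)%N.
have q1 : (0 < q)%N by rewrite divn_gt0.
have nqM : (n * q <= M)%N by rewrite mulnC leq_divM.
have M2 : (M <= 2 * n * q)%N.
  have := divn_eq M n; have := ltn_pmod M (ltn0Sn L); rewrite -/q; nia.
have M0 : (0 : R) < M%:R by rewrite ltr0n; apply: leq_trans LM.
set h : R := q%:R / M%:R.
have h0 : 0 < h by rewrite divr_gt0 // ltr0n.
have nh : 1 <= 2 * n%:R * h.
  rewrite /h mulrA ler_pdivlMr // mul1r -natrM -natrM ler_nat; exact: M2.
set S := \sum_(j < L.+1) v 0 j ^+ 2.
have S0 : 0 <= S by apply: sumr_ge0 => j _; apply: sqr_ge0.
set f := fun i : nat => (Pv v (i.+1%:R / M%:R)) ^+ 2.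
set Cm := 2 ^+ (2 * L + 1) / (h ^+ L * L`!%:R).
have Cm0 : 0 <= Cm by rewrite divr_ge0 ?exprn_ge0 // mulr_ge0 ?exprn_ge0 ?ler0n ?ltW.
have step (r : 'I_q) : S <= n%:R ^+ 3 * Cm ^+ 2 * \sum_(k < n) f (k * q + r)%N.
  have a0 : (0 : R) <= r.+1%:R / M%:R by rewrite divr_ge0 ?ler0n ?ltW.
  have aLh : r.+1%:R / M%:R + L%:R * h <= 1.
    have -> : r.+1%:R / M%:R + L%:R * h = (r.+1 + L * q)%N%:R / M%:R.
      by rewrite /h natrD natrM; field; rewrite lt0r_neq0.
    rewrite ler_pdivrMr // mul1r ler_nat.
    apply: leq_trans nqM; have := ltn_ord r; rewrite /n; nia.
  apply: (le_trans (interp_sq L _ h v h0 a0 aLh)).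
  apply: eqle; congr (_ * _); apply: eq_bigr => k _; rewrite /f.
  congr (Pv v _ ^+ 2).
  rewrite /h -!natr1 natrD natrM; field; rewrite lt0r_neq0 //.
have qS : q%:R * S <= n%:R ^+ 3 * Cm ^+ 2 * \sum_(i < M) f i.
  have -> : q%:R * S = \sum_(r < q) S by rewrite sumr_const card_ord mulr_natl.
  apply: (le_trans (ler_sum _ (fun r _ => step r))).
  rewrite -mulr_sumr; apply: ler_wpM2l; first by rewrite mulr_ge0 ?exprn_ge0 ?ler0n.
  by apply: sum_split => // i; apply: sqr_ge0.
have CmB : Cm <= 2 * 8 ^+ L * expR 1 ^+ L.
  rewrite ler_pdivrMr; last by rewrite mulr_gt0 ?exprn_gt0 ?ltr0n ?fact_gt0.
  have := fact_exp L; rewrite -/n => fe.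
  have e1 : (2 : R) ^+ (2 * L + 1) = 2 * 4 ^+ L.
    by rewrite addn1 exprS exprM expr2 -natrM.
  have e8 : (8 : R) = 2 * 4 by rewrite -natrM.
  have e2 : 2 * 4 ^+ L * (2 * n%:R * h) ^+ L = 2 * 8 ^+ L * (h ^+ L * n%:R ^+ L).
    by rewrite !exprMn e8 exprMn; ring.
  rewrite e1; apply: (@le_trans _ _ (2 * 4 ^+ L * (2 * n%:R * h) ^+ L)).
    rewrite -[X in X <= _]mulr1 ler_pM2l ?mulr_gt0 ?exprn_gt0 //.
    by rewrite exprn_ege1 // (le_trans _ nh).
  rewrite e2 -!mulrA ler_pM2l // ler_pM2l ?exprn_gt0 //.
  rewrite [X in _ <= X]mulrCA ler_pM2l ?exprn_gt0 //.
set T := \sum_(i < M) _.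
have T0 : 0 <= T by apply: sumr_ge0 => i _; apply: sqr_ge0.
apply: (@le_trans _ _ (2 * n%:R * (q%:R * S))).
  rewrite mulrA; apply: ler_wpM2r => //.
  by rewrite -natrM -natrM ler_nat.
apply: (@le_trans _ _ (2 * n%:R * (n%:R ^+ 3 * Cm ^+ 2 * T))).
  by apply: ler_wpM2l => //; rewrite mulr_ge0 ?ler0n.
have C2 : Cm ^+ 2 <= (2 * 8 ^+ L * expR 1 ^+ L) ^+ 2 by apply: sq_le; rewrite ger0_norm.
apply: (@le_trans _ _ (2 * n%:R * (n%:R ^+ 3 * (2 * 8 ^+ L * expR 1 ^+ L) ^+ 2 * T))).
  apply: ler_wpM2l; first by rewrite mulr_ge0 ?ler0n.
  apply: ler_wpM2r => //; apply: ler_wpM2l => //; by rewrite exprn_ge0 ?ler0n.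
apply: eqle.
have e64 : (64 : R) = 8 ^+ 2 by rewrite expr2 -natrM.
rewrite e64 -exprM mulnC !exprM; ring.
Qed.

End Interp.
Arguments Pv {R L}.

Theorem lemma2 (R : realType) (L M : nat) (hL : (1 <= L)%N) (hM : (L.+1 <= M)%N) :
  sigma_min ((Num.sqrt (M%:R : R))^-1 *: Bbar R M L) >=
  (1 / ((L%:R : R) ^+ 2 * 2 ^+ (7 * L) * (2 * L%:R + 1))) *
  powR (((M + L)%:R) / (expR 1 * M%:R)) (L%:R + 1 / 2).
Proof.
set A := (Num.sqrt (M%:R : R))^-1 *: Bbar R M L.
set G := A^T *m A.
set K0 : R := 8 * L.+1%:R ^+ 4 * 64 ^+ L * expR 1 ^+ (2 * L).
have K0p : 0 < K0 by rewrite !mulr_gt0 ?exprn_gt0 ?ltr0n ?expR_gt0.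
have M0 : (0 : R) < M%:R by rewrite ltr0n; apply: leq_trans hM.
have Gs : G^T = G by rewrite /G trmx_mul trmxK.
have [a0 ha0] := @sym_eig R L G Gs.
have lb : forall a, eigenvalue G a -> K0^-1 <= a.
  move=> a /eigenvalueP [v hv vnz].
  set S := \sum_(j < L.+1) v 0 j ^+ 2.
  set T := \sum_(i < M) (Pv v (i.+1%:R / M%:R)) ^+ 2.
  set s := (Num.sqrt (M%:R : R))^-1.
  have [j vj] : exists j, v 0 j != 0.
    apply/existsP; move: vnz; apply: contraR; rewrite negb_exists => /forallP h.
    by apply/eqP/rowP => j; rewrite mxE; move: (h j); rewrite negbK => /eqP ->.
  have Sp : 0 < S.
    rewrite /S (bigD1 j) //=; apply: ltr_pwDl; last by apply: sumr_ge0 => k _; apply: sqr_ge0.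
    by rewrite lt_def sqr_ge0 sqrf_eq0 vj.
  have e1 : (v *m G *m v^T) 0 0 = a * S.
    rewrite hv -scalemxAl mxE mxE /S; congr (_ * _); apply: eq_bigr => k _.
    by rewrite mxE expr2.
  have Aij (i : 'I_M) (k : 'I_L.+1) : A i k = s * (i.+1%:R / M%:R) ^+ k.
    by rewrite /A !mxE.
  have e2 : (v *m G *m v^T) 0 0 = M%:R^-1 * T.
    rewrite /G mulmxA -mulmxA mxE /T mulr_sumr; apply: eq_bigr => i _.
    have w1 : (v *m A^T) 0 i = s * Pv v (i.+1%:R / M%:R).
      rewrite mxE /Pv mulr_sumr; apply: eq_bigr => k _; rewrite !mxE /s; ring.
    have w2 : (A *m v^T) i 0 = s * Pv v (i.+1%:R / M%:R).
      rewrite mxE /Pv mulr_sumr; apply: eq_bigr => k _; rewrite !mxE /s; ring.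
    rewrite w1 w2.
    have -> : s * Pv v (i.+1%:R / M%:R) * (s * Pv v (i.+1%:R / M%:R)) =
      s ^+ 2 * Pv v (i.+1%:R / M%:R) ^+ 2 by ring.
    by rewrite /s exprVn sqr_sqrtr ?ler0n.
  have aE : a = M%:R^-1 * T / S.
    by apply: (mulIf (lt0r_neq0 Sp)); rewrite divfK ?lt0r_neq0 // -e2 e1.
  have := @key R L M v hM; rewrite -/S -/T -/K0 => kb.
  rewrite aE ler_pdivlMr // -(ler_pM2l (mulr_gt0 K0p M0)).
  have -> : K0 * M%:R * (K0^-1 * S) = M%:R * S by field; rewrite lt0r_neq0.
  have -> : K0 * M%:R * (M%:R^-1 * T) = K0 * T by field; rewrite lt0r_neq0.
  exact: kb.
have infB : K0^-1 <= inf [set a : R | eigenvalue G a].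
  by apply: lb_le_inf; [exists a0 | move=> y /= hy; exact: lb y hy].
rewrite /sigma_min -/A -/G.
set E := expR (1 : R).
have E2 : 2 <= E by have := expR_ge1Dx (1 : R).
have E0 : 0 < E by rewrite /E expR_gt0.
set X := (M + L)%:R / (E * M%:R).
have X0 : 0 < X by rewrite divr_gt0 ?mulr_gt0 // ltr0n addn_gt0 hL orbT.
have X2 : X <= 2 / E.
  rewrite ler_pdivrMr ?mulr_gt0 //.
  have -> : 2 / E * (E * M%:R) = 2 * M%:R by field; rewrite lt0r_neq0.
  by rewrite -natrM ler_nat; lia.
have X1 : X <= 1 by apply: (le_trans X2); rewrite ler_pdivrMr // mul1r.
set Dn := (L%:R : R) ^+ 2 * 2 ^+ (7 * L) * (2 * L%:R + 1).
have Dn0 : 0 < Dn by rewrite !mulr_gt0 ?exprn_gt0 ?ltr0n // addr_gt0 ?mulr_gt0 ?ltr0n.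
set P := X `^ (L%:R + 1 / 2).
have P0 : 0 <= P by apply: powR_ge0.
have PB : P <= (2 / E) ^+ L.
  rewrite /P powRD; last by rewrite (lt0r_neq0 X0) implybT.
  have Xn : 0 <= X := ltW X0.
  rewrite powR_mulrn // div1r powR12_sqrt //.
  apply: (@le_trans _ _ (X ^+ L * 1)).
    apply: ler_wpM2l; first by rewrite exprn_ge0.
    by rewrite -sqrtr1 ler_wsqrtr.
  rewrite mulr1; apply: lerXn2r => //; rewrite nnegrE //.
  by rewrite divr_ge0 // ltW.
set c := 1 / Dn * P.
have c0 : 0 <= c by rewrite mulr_ge0 // divr_ge0 ?ltW.
have cB : c <= (2 / E) ^+ L / Dn.
  by rewrite /c mulrC div1r; apply: ler_wpM2r => //; rewrite invr_ge0 ltW.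
have c2 : c ^+ 2 <= K0^-1.
  have cB' : `|c| <= (2 / E) ^+ L / Dn by rewrite ger0_norm.
  apply: (le_trans (@sq_le R _ _ cB')).
  set u := (2 : R) ^+ L; set e := E ^+ L.
  have u0 : 0 < u by rewrite exprn_gt0.
  have ep : 0 < e by rewrite exprn_gt0.
  have u2 : 2 <= u.
    rewrite /u -natrX ler_nat -{1}(expn1 2) leq_pexp2l //.
  have e2E : (2 / E) ^+ L = u / e by rewrite expr_div_n.
  have eD : Dn = L%:R ^+ 2 * u ^+ 7 * (2 * L%:R + 1) by rewrite /Dn mulnC exprM.
  have eK : K0 = 8 * (L%:R + 1) ^+ 4 * u ^+ 6 * e ^+ 2.
    rewrite /K0 -[L.+1%:R]natr1; have -> : (64 : R) = 2 ^+ 6 by rewrite -natrX.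
    by rewrite exprAC mulnC exprM.
  have l1 : (1 : R) <= L%:R by rewrite ler1n.
  have l0 : (0 : R) < L%:R by rewrite ltr0n.
  have q0 : (0 : R) < 2 * L%:R + 1 by rewrite addr_gt0 ?mulr_gt0 ?ltr0n.
  rewrite e2E eD -[K0^-1]div1r ler_pdivlMr // eK.
  have -> : (u / e / (L%:R ^+ 2 * u ^+ 7 * (2 * L%:R + 1))) ^+ 2 *
      (8 * (L%:R + 1) ^+ 4 * u ^+ 6 * e ^+ 2) =
      8 * (L%:R + 1) ^+ 4 / (L%:R ^+ 4 * u ^+ 6 * (2 * L%:R + 1) ^+ 2).
    by field; rewrite !lt0r_neq0.
  rewrite ler_pdivrMr ?mul1r; last by rewrite !mulr_gt0 ?exprn_gt0.
  set l : R := L%:R.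
  have h1 : (l + 1) ^+ 4 <= (2 * l) ^+ 4.
    by apply: lerXn2r; rewrite ?nnegrE ?addr_ge0 ?mulr_ge0 ?ler0n //; lra.
  have h2 : 3 ^+ 2 <= (2 * l + 1) ^+ 2.
    by apply: lerXn2r; rewrite ?nnegrE ?addr_ge0 ?mulr_ge0 ?ler0n //; lra.
  have h3 : 2 ^+ 6 <= u ^+ 6.
    by apply: lerXn2r; rewrite ?nnegrE ?ler0n //; lra.
  have l4 : 0 <= l ^+ 4 by rewrite exprn_ge0 // ler0n.
  apply: (@le_trans _ _ (l ^+ 4 * 2 ^+ 6 * 3 ^+ 2)).
    move: h1; rewrite exprMn.
    have -> : (2 : R) ^+ 4 = 16 by rewrite -natrX.
    have -> : (2 : R) ^+ 6 = 64 by rewrite -natrX.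
    have -> : (3 : R) ^+ 2 = 9 by rewrite -natrX.
    move=> h1; lra.
  apply: ler_pM; rewrite ?mulr_ge0 ?exprn_ge0 ?ler0n //.
  by apply: ler_pM; rewrite ?exprn_ge0 ?ler0n.
apply: (@le_trans _ _ (Num.sqrt K0^-1)); last exact: ler_wsqrtr.
by rewrite -(ger0_norm c0) -sqrtr_sqr ler_wsqrtr.
Qed.
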